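(* Let $k\in\mathbb{N}$, $p_k=3k-1$, $A_k=\{k,2k-1\}$ and $\mathcal{M}_k=\{ip_k+j:\ i\in\mathbb{N}_0,\ k\le j\le 2k-1\}$. For a game $X\subseteq\mathbb{N}_0$, one has $P(X)=\mathcal{M}_k$ if and only if $A_k\subseteq X\subseteq\mathcal{M}_k$.
   Context: A one-heap game is a set $X\subseteq\mathbb{N}_0$ of moves; from position $x\in\mathbb{N}_0$ one may move to $y\in\mathbb{N}_0$ iff $x-y\in X$. Misère play: a player who cannot move wins. If $0\in X$, $P(X)=\varnothing$. Otherwise: a position is an N-position if it has no option or some option is a P-position; otherwise it is a P-position; $P(X)$ denotes the set of P-positions. *)

(* Defs.v *)
From mathcomp Require Import all_boot.
Set Implicit Arguments. Unset Strict Implicit. Unset Printing Implicit Defensive.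

(* A one-heap game is a set X ⊆ ℕ₀ of moves, given as a predicate.  For 0 ∉ X every move strictly
   decreases the heap, so the P/N labelling is defined by strong recursion.
   [Paux X fuel x] computes "x is a P-position" (misère: no option => N),
   correct whenever fuel > x. *)
Fixpoint Paux (X : nat -> Prop) (fuel x : nat) : Prop :=
  match fuel with
  | 0 => False
  | f.+1 =>
      (exists m, [/\ 1 <= m, m <= x & X m]) /\
      (forall m, 1 <= m -> m <= x -> X m -> ~ Paux X f (x - m))
  end.

Definition isP (X : nat -> Prop) (x : nat) : Prop := ~ X 0 /\ Paux X x.+1 x.

Definition Mk (k x : nat) : Prop :=
  exists i j, [/\ k <= j, j <= 2 * k - 1 & x = i * (3 * k - 1) + j].

(* Main.v *)
Require Import Defs.
From mathcomp Require Import all_boot zify.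
From Stdlib Require Import Classical.
Module Ar.
Set Implicit Arguments. Unset Strict Implicit.

Lemma MkE k x : 1 <= k -> Mk k x <-> k <= x %% (3*k-1) <= 2*k-1.
Proof.
move=> hk; split.
- case=> i [j [h1 h2 ->]].
  rewrite modnMDl modn_small; last lia. by apply/andP; split.
- case/andP=> h1 h2; exists (x %/ (3*k-1)), (x %% (3*k-1)); split=> //.
  exact: divn_eq.
Qed.

Lemma Mk_ge k x : 1 <= k -> Mk k x -> k <= x.
Proof. move=> hk; case=> i [j [h1 h2 ->]]; nia. Qed.

Lemma Mk_diff k x m : 1 <= k -> Mk k x -> Mk k m -> m <= x -> ~ Mk k (x - m).
Proof.
move=> hk [a [r [h1 h2 Ex]]] [b [s [h3 h4 Em]]] hmx [c [t [h5 h6 Ey]]].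
have E : x = (b + c) * (3*k-1) + (s + t) by rewrite mulnDl; lia.
have : x %% (3*k-1) = (s+t) %% (3*k-1) by rewrite E modnMDl.
rewrite Ex modnMDl (modn_small (m:=r)); last lia.
case: (ltnP (s+t) (3*k-1)) => hst.
- rewrite modn_small //; lia.
- have -> : s + t = (s + t - (3*k-1)) + (3*k-1) by lia.
  rewrite modnDr modn_small; lia.
Qed.

Lemma Mk_move k x : 1 <= k -> ~ Mk k x -> k <= x ->
  exists m, [/\ m = k \/ m = 2*k-1, m <= x & Mk k (x - m)].
Proof.
move=> hk hx hkx.
have E := divn_eq x (3*k-1).
have hr : x %% (3*k-1) < 3*k-1 by rewrite ltn_mod; lia.
set q := x %/ (3*k-1) in E; set r := x %% (3*k-1) in E hr.
case: (ltnP r k) => hrk.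
- case: q E => [|q] E.
    rewrite mul0n add0n in E; lia.
  rewrite mulSn in E.
  exists (2*k-1); split; [by right| lia|].
  exists q, (r + k); split; lia.
- have hr2 : 2*k <= r.
    case: (ltnP r (2*k)) => // h; exfalso; apply: hx; apply/MkE=> //.
    rewrite /r; apply/andP; split; lia.
  exists k; split; [by left| lia|].
  exists q, (r - k); split; lia.
Qed.

Lemma Mk_witness k m : 1 <= k -> ~ Mk k m ->
  exists y, Mk k y /\ Mk k (y + m).
Proof.
move=> hk hx.
have E := divn_eq m (3*k-1).
have hr : m %% (3*k-1) < 3*k-1 by rewrite ltn_mod; lia.
set q := m %/ (3*k-1) in E; set r := m %% (3*k-1) in E hr.
case: (ltnP r k) => hrk.
- exists k; split; first by exists 0, k; split; lia.
  exists q, (r + k); split; lia.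
- have hr2 : 2*k <= r.
    case: (ltnP r (2*k)) => // h; exfalso; apply: hx; apply/MkE=> //.
    rewrite /r; apply/andP; split; lia.
  exists (2*k-1); split; first by exists 0, (2*k-1); split; lia.
  exists q.+1, (r - k); split; rewrite ?mulSn; lia.
Qed.

Lemma Mk_small k x : 1 <= k -> x < k -> ~ Mk k x.
Proof. move=> hk hx /(Mk_ge hk); lia. Qed.

Lemma Mk_4k k : 1 <= k -> ~ Mk k (4*k-2).
Proof.
move=> hk /(MkE _ hk).
have -> : 4*k-2 = (k-1) + (3*k-1) by lia.
rewrite modnDr modn_small; lia.
Qed.

Lemma Mk_4k_move k m : 1 <= k -> Mk k m -> m <= 4*k-2 -> Mk k (4*k-2-m) ->
  m = 2*k-1.
Proof.
move=> hk [b [s [h1 h2 ->]]] hle /(MkE _ hk).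
case: b hle => [|b]; last by rewrite mulSn; lia.
rewrite mul0n add0n => hle.
rewrite modn_small; lia.
Qed.
End Ar.
Import Ar.

Lemma Paux_fuel X f g x : x < f -> x < g -> (Paux X f x <-> Paux X g x).
Proof.
elim: f g x => [|f IH] [|g] x //= hf hg.
split; case=> h1 h2; split=> // m m1 mx hm.
- rewrite -(IH g); [exact: h2| lia| lia].
- rewrite (IH g); [exact: h2| lia| lia].
Qed.

Lemma isP_rec X x : ~ X 0 ->
  isP X x <-> (exists m, [/\ 1 <= m, m <= x & X m]) /\
              (forall m, 1 <= m -> m <= x -> X m -> ~ isP X (x - m)).
Proof.
move=> h0; rewrite /isP /=; split.
- case=> _ [h1 h2]; split=> // m m1 mx hm [_ hp]; apply: (h2 m m1 mx hm).
  by rewrite (Paux_fuel X x (x - m).+1) //; lia.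
- case=> h1 h2; split=> //; split=> // m m1 mx hm hp; apply: (h2 m m1 mx hm).
  split=> //; move: hp; rewrite (Paux_fuel X x (x - m).+1 (x - m)) //; lia.
Qed.

Lemma isP_uniq X (Q : nat -> Prop) : ~ X 0 ->
  (forall x, Q x <-> (exists m, [/\ 1 <= m, m <= x & X m]) /\
              (forall m, 1 <= m -> m <= x -> X m -> ~ Q (x - m))) ->
  forall x, isP X x <-> Q x.
Proof.
move=> h0 HQ x; elim: x {-2}x (leqnn x) => [|n IH] x hx.
- rewrite isP_rec // HQ; split; case=> [[m [m1 mx _]]]; lia.
- rewrite isP_rec // HQ; split; case=> h1 h2; split=> // m m1 mx hm.
  + rewrite -IH; [exact: h2| lia].
  + rewrite IH; [exact: h2| lia].
Qed.

Theorem theorem8 (k : nat) (hk : 1 <= k) (X : nat -> Prop) :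
  (forall x, isP X x <-> Mk k x) <->
  [/\ X k, X (2 * k - 1) & forall x, X x -> Mk k x].
Proof.
have Mkk : Mk k k by exists 0, k; split; lia.
split.
- move=> H.
  have h0 : ~ X 0 by move=> h0; case: (proj2 (H k) Mkk).
  have rec : forall x, Mk k x <-> (exists m, [/\ 1 <= m, m <= x & X m]) /\
              (forall m, 1 <= m -> m <= x -> X m -> ~ Mk k (x - m)).
    move=> x; rewrite -H isP_rec //; split; case=> h1 h2; split=> // m m1 mx hm.
    + by rewrite -H; apply: h2.
    + by rewrite H; apply: h2.
  have small : forall m, 1 <= m -> m < k -> ~ X m.
    move=> m m1 mk hm; apply: (Mk_small hk mk); apply/rec; split.
      by exists m; split.
    move=> m' m1' mx hm'; apply: Mk_small; lia.
  have Xk : X k.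
    case: (proj1 (rec k) Mkk) => [[m [m1 mx hm]] _].
    case: (ltnP m k) => h; first by case: (small m m1 h hm).
    by have -> : k = m by lia.
  have sub : forall x, X x -> Mk k x.
    move=> m hm; apply: NNPP => hn.
    have m1 : 1 <= m by case: m hm {hn} => // /h0.
    case: (Mk_witness hk hn) => y [hy hym].
    case: (proj1 (rec _) hym) => _ /(_ m m1) h.
    apply: (h _ hm); first lia.
    by rewrite addnK.
  split=> //; apply: NNPP => hn.
  apply: (Mk_4k hk); apply/rec; split.
    exists k; split=> //; lia.
  move=> m m1 mx hm hM; apply: hn.
  by rewrite -(Mk_4k_move hk (sub m hm) mx hM).
- case=> Xk X2 sub.
  have h0 : ~ X 0 by move=> /sub; apply: Mk_small.
  move=> x; apply: isP_uniq => // {}x; split.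
  + move=> hx; split.
      exists k; split=> //; exact: Mk_ge hk hx.
    move=> m m1 mx hm; exact: Mk_diff hk hx (sub m hm) mx.
  + case=> [[m0 [m1 mx hm]] h2]; apply: NNPP => hn.
    have := Mk_ge hk (sub m0 hm).
    move=> hkx; case: (Mk_move hk hn (leq_trans hkx mx)) => m [[->|->] hmx hM].
    * by apply: (h2 k) => //.
    * by apply: (h2 (2*k-1)) => //; lia.
Qed.
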